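(* Let $G$ be a group and let $(\hat{X},Z)$ be a pair such that: (1) $\hat{X}$ is a compact AR; (2) $\hat{X}$ is a $\mathscr{Z}$-compactification of $X=\hat{X}-Z$; (3) $G$ acts properly and cocompactly on $X$ (not necessarily freely); (4) (nullity condition) for every compact set $C\subseteq X$ and every open cover $\mathscr{U}$ of $\hat{X}$, all but finitely many $G$-translates of $C$ lie in a single element of $\mathscr{U}$. Then $\dim Z<\infty$ (Lebesgue covering dimension).
   Context: All spaces are locally compact, separable and metrizable. A separable metric space is an AR if whenever it is embedded as a closed subset of another separable metric space, its image is a retract of that space; it is an ANR if some neighborhood of the image retracts onto it. A closed subset $A$ of an ANR $Y$ is a $\mathscr{Z}$-set if there is a homotopy $H:Y\times[0,1]\to Y$ with $H_0=\mathrm{id}_Y$ and $H_t(Y)\subset Y-A$ for all $t>0$. A $\mathscr{Z}$-compactification of $Y$ is a compactification $\hat{Y}$ such that $\hat{Y}-Y$ is a $\mathscr{Z}$-set in $\hat{Y}$. A pair as in the claim is a $\mathscr{Z}$-structure on $G$ in the sense of Dranishnikov. *)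

(* Defs.v *)
From Stdlib Require Import Reals Lra List ProofIrrelevance.
Open Scope R_scope.

Record MetricSpace := {
  carrier :> Type;
  dist : carrier -> carrier -> R;
  dist_refl : forall x, dist x x = 0;
  dist_sep : forall x y, dist x y = 0 -> x = y;
  dist_sym : forall x y, dist x y = dist y x;
  dist_tri : forall x y z, dist x z <= dist x y + dist y z
}.
Arguments dist {m} _ _.

Section Topology.
Variable M : MetricSpace.

Definition is_open (U : M -> Prop) : Prop :=
  forall x, U x -> exists eps, 0 < eps /\ forall y, dist x y < eps -> U y.

Definition is_closed (A : M -> Prop) : Prop := is_open (fun x => ~ A x).

Definition dense (A : M -> Prop) : Prop :=
  forall x eps, 0 < eps -> exists y, A y /\ dist x y < eps.

Definition separable : Prop :=
  (forall x : M, False) \/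
  exists s : nat -> M, dense (fun y => exists n, s n = y).

Definition compact_set (K : M -> Prop) : Prop :=
  forall (U : (M -> Prop) -> Prop),
    (forall V, U V -> is_open V) ->
    (forall x, K x -> exists V, U V /\ V x) ->
    exists l : list (M -> Prop),
      (forall V, In V l -> U V) /\ (forall x, K x -> exists V, In V l /\ V x).

Definition compact_space : Prop := compact_set (fun _ => True).

Definition open_cover (U : (M -> Prop) -> Prop) : Prop :=
  (forall V, U V -> is_open V) /\ (forall x, exists V, U V /\ V x).

(** Lebesgue covering dimension <= n: every finite open cover has a finite
    open refinement of order <= n+1 (no point lies in n+2 members with
    distinct indices). *)
Definition covering_dim_le (n : nat) : Prop :=
  forall C : list (M -> Prop),
    (forall V, In V C -> is_open V) ->
    (forall x, exists V, In V C /\ V x) ->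
    exists D : list (M -> Prop),
      (forall W, In W D -> is_open W) /\
      (forall x, exists W, In W D /\ W x) /\
      (forall W, In W D -> exists V, In V C /\ forall x, W x -> V x) /\
      (forall idx : list nat,
          NoDup idx -> length idx = S (S n) ->
          (forall i, In i idx -> (i < length D)%nat) ->
          ~ exists x, forall i, In i idx -> nth i D (fun _ => False) x).

Definition finite_dimensional : Prop := exists n, covering_dim_le n.

End Topology.

Arguments is_open {M} _.
Arguments is_closed {M} _.
Arguments dense {M} _.
Arguments compact_set {M} _.
Arguments open_cover {M} _.

Definition continuous {M N : MetricSpace} (f : M -> N) : Prop :=
  forall x eps, 0 < eps ->
    exists delta, 0 < delta /\ forall y, dist x y < delta -> dist (f x) (f y) < eps.

Definition closed_embedding {M N : MetricSpace} (e : M -> N) : Prop :=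
  continuous e /\
  (forall x y, e x = e y -> x = y) /\
  (forall x eps, 0 < eps -> exists delta, 0 < delta /\
      forall y, dist (e x) (e y) < delta -> dist x y < eps) /\
  is_closed (fun y => exists x, e x = y).

(** Absolute retract (for separable metric spaces): whenever M is embedded as a
    closed subset of a separable metric space Y, its image is a retract of Y
    (equivalently a continuous r : Y -> M with r o e = id). *)
Definition AR (M : MetricSpace) : Prop :=
  forall (Y : MetricSpace) (e : M -> Y),
    separable Y -> closed_embedding e ->
    exists r : Y -> Y, continuous r /\
      (forall y, exists x, r y = e x) /\
      (forall x, r (e x) = e x).

Definition Z_set {M : MetricSpace} (A : M -> Prop) : Prop :=
  is_closed A /\
  exists H : M -> R -> M,
    (forall x t eps, 0 <= t <= 1 -> 0 < eps -> exists delta, 0 < delta /\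
        forall y s, 0 <= s <= 1 -> dist x y < delta -> Rabs (t - s) < delta ->
          dist (H x t) (H y s) < eps) /\
    (forall x, H x 0 = x) /\
    (forall x t, 0 < t <= 1 -> ~ A (H x t)).

Section Sub.
Variable M : MetricSpace.
Variable P : M -> Prop.

Definition sub_dist (a b : {x : M | P x}) : R := dist (proj1_sig a) (proj1_sig b).

Lemma sub_refl : forall a, sub_dist a a = 0.
Proof. intros a; apply dist_refl. Qed.

Lemma sub_sep : forall a b, sub_dist a b = 0 -> a = b.
Proof.
  intros [a pa] [b pb] H; unfold sub_dist in H; simpl in H.
  apply dist_sep in H; subst b; f_equal; apply proof_irrelevance.
Qed.

Lemma sub_sym : forall a b, sub_dist a b = sub_dist b a.
Proof. intros; apply dist_sym. Qed.

Lemma sub_tri : forall a b c, sub_dist a c <= sub_dist a b + sub_dist b c.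
Proof. intros; apply dist_tri. Qed.

Definition subspace : MetricSpace :=
  {| carrier := {x : M | P x}; dist := sub_dist;
     dist_refl := sub_refl; dist_sep := sub_sep;
     dist_sym := sub_sym; dist_tri := sub_tri |}.
End Sub.

Definition Z_compactification (Xhat : MetricSpace) (Z : Xhat -> Prop) : Prop :=
  compact_space Xhat /\ dense (fun x => ~ Z x) /\ Z_set Z.

Record Group := {
  gcarrier :> Type;
  gmul : gcarrier -> gcarrier -> gcarrier;
  gone : gcarrier;
  ginv : gcarrier -> gcarrier;
  gmulA : forall a b c, gmul a (gmul b c) = gmul (gmul a b) c;
  gmul1l : forall a, gmul gone a = a;
  gmulVl : forall a, gmul (ginv a) a = gone
}.
Arguments gmul {g} _ _.
Arguments gone {g}.
Arguments ginv {g} _.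

Definition is_action (G : Group) (X : MetricSpace) (act : G -> X -> X) : Prop :=
  (forall x, act gone x = x) /\
  (forall g h x, act (gmul g h) x = act g (act h x)) /\
  (forall g, continuous (act g)).

Definition proper_action (G : Group) (X : MetricSpace) (act : G -> X -> X) : Prop :=
  forall K : X -> Prop, compact_set K ->
    exists l : list G, forall g, (exists x, K x /\ K (act g x)) -> In g l.

Definition cocompact_action (G : Group) (X : MetricSpace) (act : G -> X -> X) : Prop :=
  exists K : X -> Prop, compact_set K /\ forall x, exists g y, K y /\ act g y = x.

(* Main.v *)
Require Import Defs.
From Stdlib Require Import Reals List.
From Stdlib Require Import Lra Lia Classical.
Open Scope R_scope.
Local Notation dist := Defs.dist.

Lemma ball_open (M : MetricSpace) (c : M) (e : R) : is_open (fun y => dist c y < e).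
Proof.
  intros x Hx. exists (e - dist c x); split; [lra|].
  intros y Hy. pose proof (Defs.dist_tri M c x y). lra.
Qed.

Lemma list_choose {A B : Type} (Rl : A -> B -> Prop) (l : list A) :
  (forall a, In a l -> exists b, Rl a b) ->
  exists lb, (forall a, In a l -> exists b, In b lb /\ Rl a b) /\
             (forall b, In b lb -> exists a, In a l /\ Rl a b).
Proof.
  induction l as [|a l IH]; intros H.
  - exists nil; split; intros x []. 
  - destruct IH as [lb [H1 H2]]; [intros; apply H; right; auto|].
    destruct (H a (or_introl eq_refl)) as [b Hb].
    exists (b :: lb); split.
    + intros x [<-|Hx]; [exists b; split; [left|]; auto|].
      destruct (H1 x Hx) as [b' [? ?]]; exists b'; split; [right|]; auto.
    + intros y [<-|Hy]; [exists a; split; [left|]; auto|].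
      destruct (H2 y Hy) as [a' [? ?]]; exists a'; split; [right|]; auto.
Qed.

Lemma cover_lemma (M : MetricSpace) (K : M -> Prop) (P : M -> R -> Prop) :
  compact_set K -> (forall k, K k -> exists e, 0 < e /\ P k e) ->
  exists l : list (M * R),
    (forall q, In q l -> K (fst q) /\ 0 < snd q /\ P (fst q) (snd q)) /\
    (forall x, K x -> exists q, In q l /\ dist (fst q) x < snd q).
Proof.
  intros Hc Hp.
  destruct (Hc (fun V => exists k e, K k /\ 0 < e /\ P k e /\ V = (fun y => dist k y < e)))
    as [l [Hl Hcov]].
  - intros V [k [e [_ [_ [_ ->]]]]]; apply ball_open.
  - intros x Kx; destruct (Hp x Kx) as [e [He Pe]].
    exists (fun y => dist x y < e); split; [exists x, e; auto|]. rewrite Defs.dist_refl; auto.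
  - destruct (list_choose (fun V q => K (fst q) /\ 0 < snd q /\ P (fst q) (snd q) /\
                  V = (fun y => dist (fst q) y < snd q)) l) as [lq [H1 H2]].
    { intros V HV. destruct (Hl V HV) as [k [e [? [? [? ->]]]]]. exists (k, e); simpl; auto. }
    exists lq; split.
    + intros q Hq; destruct (H2 q Hq) as [V [_ [? [? [? _]]]]]; auto.
    + intros x Kx. destruct (Hcov x Kx) as [V [HV Vx]].
      destruct (H1 V HV) as [q [Hq [_ [_ [_ ->]]]]]. exists q; auto.
Qed.

Lemma unif_min {T : Type} (l : list T) (Q : T -> R -> Prop) :
  (forall q, In q l -> exists r, 0 < r /\ Q q r) ->
  (forall q r r', 0 < r' <= r -> Q q r -> Q q r') ->
  exists r, 0 < r /\ forall q, In q l -> Q q r.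
Proof.
  intros H Hm. induction l as [|a l IH].
  - exists 1; split; [lra| intros q []].
  - destruct IH as [r [Hr Hq]]; [intros; apply H; right; auto|].
    destruct (H a (or_introl eq_refl)) as [r' [Hr' Ha]].
    exists (Rmin r r'); split; [apply Rmin_pos; auto|].
    intros q [<-|Hin].
    + apply Hm with r'; auto. split; [apply Rmin_pos; auto| apply Rmin_r].
    + apply Hm with r; auto. split; [apply Rmin_pos; auto| apply Rmin_l].
Qed.

Lemma closed_compact (M : MetricSpace) (A : M -> Prop) :
  compact_space M -> is_closed A -> compact_set A.
Proof.
  intros Hc Hcl U HU Hcov.
  destruct (Hc (fun V => U V \/ V = (fun x => ~ A x))) as [l [Hl Hlc]].
  - intros V [HV| ->]; auto.
  - intros x _. destruct (classic (A x)) as [Ax|nAx].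
    + destruct (Hcov x Ax) as [V [? ?]]; exists V; auto.
    + exists (fun x => ~ A x); auto.
  - assert (exists l', (forall V, In V l' -> U V) /\ forall V, In V l -> U V -> In V l') as [l' [H1 H2]].
    { clear Hlc. induction l as [|a l IH].
      - exists nil; split; intros V []. 
      - destruct IH as [l' [H1 H2]]; [intros; apply Hl; right; auto|].
        destruct (classic (U a)) as [Ua|nUa].
        + exists (a :: l'); split.
          * intros V [<-|?]; auto.
          * intros V [<-|?] ?; [left; auto| right; auto].
        + exists l'; split; auto. intros V [<-|?] ?; [contradiction| auto]. }
    exists l'; split; auto.
    intros x Ax. destruct (Hlc x I) as [V [HV Vx]].
    destruct (Hl V HV) as [UV| ->]; [|contradiction].
    exists V; auto.
Qed.

Lemma compact_sub (M : MetricSpace) (P A : M -> Prop) :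
  compact_set A -> (forall y, A y -> P y) ->
  @compact_set (subspace M P) (fun x => A (proj1_sig x)).
Proof.
  intros Hc HAP U HU Hcov.
  destruct (Hc (fun V' => is_open V' /\ exists V, U V /\
                 forall x : subspace M P, V' (proj1_sig x) -> V x)) as [l [Hl Hlc]].
  - intros V [? _]; auto.
  - intros y Ay. destruct (Hcov (exist _ y (HAP y Ay)) Ay) as [V [UV Vx]].
    destruct (HU V UV _ Vx) as [eps [Heps Hb]].
    exists (fun z => dist y z < eps); split; [split; [apply ball_open|]|].
    + exists V; split; [auto|]. intros x Hx. apply Hb. exact Hx.
    + rewrite Defs.dist_refl; auto.
  - destruct (list_choose (fun V' V => U V /\ forall x : subspace M P, V' (proj1_sig x) -> V x) l)
      as [lv [H1 H2]].
    { intros V' HV'. destruct (Hl V' HV') as [_ [V ?]]. exists V; auto. }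
    exists lv; split.
    + intros V HV. destruct (H2 V HV) as [? [? [? ?]]]; auto.
    + intros x Ax. destruct (Hlc _ Ax) as [V' [HV' V'x]].
      destruct (H1 V' HV') as [V [? [? HV]]]. exists V; auto.
Qed.

Lemma NoDup_map_in {A B : Type} (f : A -> B) (l : list A) :
  NoDup l -> (forall x y, In x l -> In y l -> f x = f y -> x = y) -> NoDup (map f l).
Proof.
  induction l as [|a l IH]; intros Hn Hi; simpl; constructor.
  - inversion Hn; subst. intros Hin. apply in_map_iff in Hin as [x [Hx Hxl]].
    assert (x = a) by (apply Hi; simpl; auto). subst; contradiction.
  - inversion Hn; subst. apply IH; auto. intros; apply Hi; simpl; auto.
Qed.

Lemma dedup {A : Type} (l : list A) : exists l', NoDup l' /\ forall x, In x l <-> In x l'.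
Proof.
  induction l as [|a l [l' [Hn Hi]]].
  - exists nil; split; [constructor| tauto].
  - destruct (classic (In a l')).
    + exists l'; split; auto. intros x; simpl; rewrite Hi; split; [intros [<-|]|]; auto.
    + exists (a :: l'); split; [constructor; auto|]. intros x; simpl; rewrite Hi; tauto.
Qed.

Section Grp.
Variable G : Group.
Lemma mulgV (g : G) : gmul g (ginv g) = gone.
Proof.
  transitivity (gmul (gmul (ginv (ginv g)) (ginv g)) (gmul g (ginv g))).
  { rewrite gmulVl, gmul1l; reflexivity. }
  rewrite <- gmulA, (gmulA G (ginv g) g), gmulVl, gmul1l. apply gmulVl.
Qed.
Lemma mulg1 (g : G) : gmul g gone = g.
Proof. rewrite <- (gmulVl G g), gmulA, mulgV. apply gmul1l. Qed.
Lemma mulg_rcancel (a b h : G) : gmul a h = gmul b h -> a = b.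
Proof.
  intros E. rewrite <- (mulg1 a), <- (mulg1 b), <- (mulgV h), !gmulA, E. reflexivity.
Qed.
End Grp.

Lemma sub_dist_eq (M : MetricSpace) (P : M -> Prop) (a b : subspace M P) :
  dist a b = dist (proj1_sig a) (proj1_sig b).
Proof. reflexivity. Qed.

Theorem corollary3p3
  (G : Group) (Xhat : MetricSpace) (Z : Xhat -> Prop)
  (act : G -> subspace Xhat (fun x => ~ Z x) -> subspace Xhat (fun x => ~ Z x))
  (H1 : AR Xhat /\ compact_space Xhat)
  (H2 : Z_compactification Xhat Z)
  (H3 : is_action G _ act /\ proper_action G _ act /\ cocompact_action G _ act)
  (H4 : forall (C : subspace Xhat (fun x => ~ Z x) -> Prop)
               (U : (Xhat -> Prop) -> Prop),
          compact_set C -> open_cover U ->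
          exists l : list G, forall g, ~ In g l ->
            exists V, U V /\ forall c, C c -> V (proj1_sig (act g c))) :
  finite_dimensional (subspace Xhat Z).
Proof.
  destruct H2 as [Hcomp [_ [HZcl [H [Hcont [H0 Hav]]]]]].
  destruct H3 as [[Hact1 [Hactm Hactc]] [Hprop [K0 [HK0 HK0c]]]].
  destruct (cover_lemma _ K0 (fun k e => forall y : Xhat, dist (proj1_sig k) y <= 2 * e -> ~ Z y) HK0)
    as [L [HL HLc]].
  { intros k _. destruct (HZcl (proj1_sig k) (proj2_sig k)) as [eps [Heps Hb]].
    exists (eps / 4); split; [lra|]. intros y Hy. apply Hb. lra. }
  set (A := fun y : Xhat => exists q, In q L /\ dist (proj1_sig (fst q)) y <= 2 * snd q).
  set (Cset := fun x : subspace Xhat (fun x => ~ Z x) => A (proj1_sig x)).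
  set (N := fun x : subspace Xhat (fun x => ~ Z x) => exists q, In q L /\ dist (fst q) x < snd q).
  assert (HAZ : forall y, A y -> ~ Z y).
  { intros y [q [Hq Hd]]. destruct (HL q Hq) as [_ [_ Hp]]. apply Hp; auto. }
  assert (HKN : forall k, K0 k -> N k).
  { intros k Hk. destruct (HLc k Hk) as [q [? ?]]. exists q; auto. }
  assert (HNC : forall x, N x -> Cset x).
  { intros x [q [Hq Hd]]. exists q; split; auto. rewrite sub_dist_eq in Hd.
    destruct (HL q Hq) as [_ [Hpos _]]. lra. }
  assert (HNopen : is_open N).
  { intros x [q [Hq Hd]]. exists (snd q - dist (fst q) x); split; [lra|].
    intros y Hy. exists q; split; auto. pose proof (Defs.dist_tri _ (fst q) x y). lra. }
  assert (HAcl : is_closed A).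
  { intros y Hy.
    destruct (unif_min L (fun q r => forall y', dist y y' < r -> 2 * snd q < dist (proj1_sig (fst q)) y')) as [r [Hr Hrq]].
    - intros q Hq. exists (dist (proj1_sig (fst q)) y - 2 * snd q).
      assert (2 * snd q < dist (proj1_sig (fst q)) y).
      { apply Rnot_le_lt. intro; apply Hy; exists q; auto. }
      split; [lra|]. intros y' Hy'. pose proof (Defs.dist_tri _ (proj1_sig (fst q)) y' y) as Ht.
      rewrite (Defs.dist_sym _ y' y) in Ht. lra.
    - intros q r r' Hrr Hq y' Hy'. apply Hq. lra.
    - exists r; split; auto. intros y' Hy' [q [Hq Hd]]. specialize (Hrq q Hq y' Hy'). lra. }
  assert (HCc : compact_set Cset) by (apply compact_sub; auto; apply closed_compact; auto).
  destruct (Hprop Cset HCc) as [lP HlP].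
  assert (HZc : compact_set Z) by (apply closed_compact; auto).
  assert (HZsc : @compact_set (subspace Xhat Z) (fun _ => True)).
  { intros U HU Hcov. destruct (compact_sub Xhat Z Z HZc (fun y Hy => Hy) U HU) as [l [? Hl]].
    - intros x _; apply Hcov; auto.
    - exists l; split; auto. intros x _. apply Hl. exact (proj2_sig x). }
  exists (length lP). intros Cl HClo HClc.
  destruct (cover_lemma _ (fun _ => True)
    (fun z e => exists V, In V Cl /\ forall z', dist z z' < 2 * e -> V z') HZsc) as [LL [HLL HLLc]].
  { intros z _. destruct (HClc z) as [V [HV Vz]]. destruct (HClo V HV z Vz) as [eps [Heps Hb]].
    exists (eps / 2); split; [lra|]. exists V; split; auto. intros z' Hz'; apply Hb; lra. }
  destruct (unif_min LL (fun q r => r <= snd q)) as [lam [Hlam Hlamq]].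
  { intros q Hq. exists (snd q); split; [apply HLL; auto| lra]. }
  { intros; lra. }
  assert (Leb : forall z, exists V, In V Cl /\ forall z', dist z z' < lam -> V z').
  { intros z. destruct (HLLc z I) as [q [Hq Hd]]. destruct (HLL q Hq) as [_ [_ [V [HV HVb]]]].
    exists V; split; auto. intros z' Hz'. apply HVb. specialize (Hlamq q Hq).
    pose proof (Defs.dist_tri _ (fst q) z z'). lra. }
  destruct (H4 Cset (fun V => exists a, V = (fun y => dist a y < lam / 4)) HCc) as [l Hl].
  { split.
    - intros V [a ->]; apply ball_open.
    - intros x. exists (fun y => dist x y < lam / 4); split; [exists x; auto|].
      rewrite Defs.dist_refl; lra. }
  destruct (unif_min l (fun g r => forall c, Cset c -> forall y, dist (proj1_sig (act g c)) y < r -> ~ Z y))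
    as [rho [Hrho Hrhog]].
  { intros g _.
    destruct (cover_lemma _ Cset (fun c e => exists r, 0 < r /\ forall c', dist c c' < e ->
               forall y, dist (proj1_sig (act g c')) y < r -> ~ Z y) HCc) as [LC [HLC HLCc]].
    - intros c _. destruct (HZcl _ (proj2_sig (act g c))) as [eps [Heps Hb]].
      destruct (Hactc g c (eps / 2)) as [d [Hd Hdb]]; [lra|].
      exists d; split; auto. exists (eps / 2); split; [lra|].
      intros c' Hc' y Hy. apply Hb. specialize (Hdb c' Hc'). rewrite sub_dist_eq in Hdb.
      pose proof (Defs.dist_tri _ (proj1_sig (act g c)) (proj1_sig (act g c')) y). lra.
    - destruct (unif_min LC (fun q r => forall c', dist (fst q) c' < snd q ->
               forall y, dist (proj1_sig (act g c')) y < r -> ~ Z y)) as [r [Hr Hrq]].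
      + intros q Hq. destruct (HLC q Hq) as [_ [_ ?]]; auto.
      + intros q r r' Hrr Hq c' Hc' y Hy. apply (Hq c' Hc'). lra.
      + exists r; split; auto. intros c Hc. destruct (HLCc c Hc) as [q [Hq Hd]]. eauto. }
  { intros g r r' Hrr Hg c Hc y Hy. apply (Hg c Hc). lra. }
  set (eta := Rmin rho (lam / 4)).
  assert (Heta : 0 < eta) by (apply Rmin_pos; lra).
  assert (Heta1 : eta <= rho) by apply Rmin_l.
  assert (Heta2 : eta <= lam / 4) by apply Rmin_r.
  destruct (cover_lemma _ Z (fun z e => forall y s, 0 <= s <= 1 -> dist z y < e ->
              Rabs (0 - s) < e -> dist z (H y s) < eta / 2) HZc) as [LZ [HLZ HLZc]].
  { intros z _. destruct (Hcont z 0 (eta / 2)) as [d [Hd Hdb]]; [lra|lra|].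
    exists d; split; auto. intros y s Hs Hy Hs'. rewrite <- (H0 z) at 1. apply Hdb; auto. }
  destruct (unif_min LZ (fun q r => r <= snd q)) as [m [Hm Hmq]].
  { intros q Hq. exists (snd q); split; [apply HLZ; auto| lra]. }
  { intros; lra. }
  set (t := Rmin 1 (m / 2)).
  assert (Ht01 : 0 < t <= 1) by (split; [apply Rmin_pos; lra| apply Rmin_l]).
  assert (Htm : t <= m / 2) by apply Rmin_r.
  assert (Htz : forall z, Z z -> dist z (H z t) < eta).
  { intros z Zz. destruct (HLZc z Zz) as [q [Hq Hd]]. destruct (HLZ q Hq) as [_ [_ Hp]].
    specialize (Hmq q Hq).
    assert (E1 := Hp z t ltac:(lra) Hd ltac:(rewrite Rabs_minus_sym, Rminus_0_r, Rabs_right; lra)).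
    assert (E2 := Hp z 0 ltac:(lra) Hd ltac:(rewrite Rminus_0_r, Rabs_R0; lra)).
    rewrite H0 in E2. pose proof (Defs.dist_tri _ z (fst q) (H z t)) as T3.
    rewrite (Defs.dist_sym _ z (fst q)) in T3. lra. }
  set (Ht := fun z : subspace Xhat Z =>
         exist (fun x => ~ Z x) (H (proj1_sig z) t) (Hav (proj1_sig z) t Ht01)
         : subspace Xhat (fun x => ~ Z x)).
  set (W := fun h (z : subspace Xhat Z) => N (act h (Ht z))).
  assert (Wopen : forall h, is_open (W h)).
  { intros h z Wz. destruct (HNopen _ Wz) as [e [He Hb]].
    destruct (Hactc h (Ht z) e He) as [d [Hd Hdb]].
    destruct (Hcont (proj1_sig z) t d ltac:(lra) Hd) as [d' [Hd' Hdb']].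
    exists d'; split; auto. intros z' Hz'. apply Hb. apply Hdb.
    rewrite sub_dist_eq. simpl. apply Hdb'; auto; [lra|].
    rewrite Rminus_diag, Rabs_R0; lra. }
  set (good := fun h => exists V, In V Cl /\ forall z, W h z -> V z).
  assert (Key : forall z, exists h, good h /\ W h z).
  { intros z. destruct (HK0c (Ht z)) as [g [y [Ky Ey]]].
    assert (Wz : W (ginv g) z).
    { unfold W. rewrite <- Ey, <- Hactm, gmulVl, Hact1. apply HKN; auto. }
    exists (ginv g); split; auto.
    assert (Hnl : ~ In g l).
    { intro Hin. apply (Hrhog g Hin y (HNC y (HKN y Ky)) (proj1_sig z)).
      - rewrite Ey. simpl. rewrite Defs.dist_sym. specialize (Htz _ (proj2_sig z)). lra.
      - exact (proj2_sig z). }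
    destruct (Hl g Hnl) as [V [[a ->] HV]].
    destruct (Leb z) as [V0 [HV0 HV0b]]. exists V0; split; auto.
    intros z' Wz'. apply HV0b.
    assert (Ea : dist a (H (proj1_sig z') t) < lam / 4).
    { specialize (HV (act (ginv g) (Ht z')) (HNC _ Wz')).
      rewrite <- Hactm, mulgV, Hact1 in HV. exact HV. }
    assert (Eb : dist a (H (proj1_sig z) t) < lam / 4).
    { specialize (HV y (HNC y (HKN y Ky))). rewrite Ey in HV. exact HV. }
    assert (E1 := Htz _ (proj2_sig z)). assert (E2 := Htz _ (proj2_sig z')).
    rewrite sub_dist_eq.
    pose proof (Defs.dist_tri _ (proj1_sig z) (H (proj1_sig z) t) (proj1_sig z')) as T1.
    pose proof (Defs.dist_tri _ (H (proj1_sig z) t) a (proj1_sig z')) as T2.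
    pose proof (Defs.dist_tri _ a (H (proj1_sig z') t) (proj1_sig z')) as T3.
    rewrite (Defs.dist_sym _ (H (proj1_sig z) t) a) in T2.
    rewrite (Defs.dist_sym _ (H (proj1_sig z') t) (proj1_sig z')) in T3. lra. }
  destruct (HZsc (fun V => exists h, good h /\ V = W h)) as [lW [HlW HlWc]].
  { intros V [h [_ ->]]; apply Wopen. }
  { intros z _. destruct (Key z) as [h [? ?]]. exists (W h); split; eauto. }
  destruct (list_choose (fun V h => good h /\ V = W h) lW) as [hs0 [Hh1 Hh2]].
  { intros V HV; apply HlW; auto. }
  destruct (dedup hs0) as [gl [Hgl Hgli]].
  exists (map W gl). split; [|split; [|split]].
  - intros V HV. apply in_map_iff in HV as [h [<- _]]. apply Wopen.
  - intros z. destruct (HlWc z I) as [V [HV Vz]]. destruct (Hh1 V HV) as [h [Hh [_ ->]]].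
    exists (W h); split; auto. apply in_map; apply Hgli; auto.
  - intros V HV. apply in_map_iff in HV as [h [<- Hh]]. apply Hgli in Hh.
    destruct (Hh2 h Hh) as [_ [_ [? _]]]; auto.
  - intros idx Hnd Hlen Hidx [z Hz].
    rewrite length_map in Hidx.
    assert (HW : forall i, In i idx -> W (nth i gl gone) z).
    { intros i Hi. specialize (Hz i Hi).
      rewrite (@nth_indep _ (map W gl) i _ (W gone)) in Hz by (rewrite length_map; auto).
      rewrite map_nth in Hz. exact Hz. }
    destruct idx as [|i0 idx']; [discriminate|].
    set (h1 := nth i0 gl gone).
    set (hs := map (fun i => nth i gl gone) (i0 :: idx')).
    assert (Hhs : NoDup hs).
    { apply NoDup_map_in; auto. intros i j Hi Hj E.
      apply (proj1 (NoDup_nth gl gone) Hgl); auto. }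
    set (es := map (fun h => gmul h (ginv h1)) hs).
    assert (Hes : NoDup es).
    { apply NoDup_map_in; auto. intros a b _ _ E. eapply mulg_rcancel; eauto. }
    assert (Hinc : incl es lP).
    { intros e He. apply in_map_iff in He as [h [<- Hh]].
      apply in_map_iff in Hh as [i [<- Hi]].
      apply HlP. exists (act h1 (Ht z)). split.
      - apply HNC. apply HW. left; auto.
      - rewrite <- Hactm, <- gmulA, gmulVl, mulg1. apply HNC. apply HW; auto. }
    pose proof (NoDup_incl_length Hes Hinc) as Hle.
    unfold es, hs in Hle. rewrite !length_map in Hle. simpl in Hlen, Hle. lia.
Qed.
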